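(* Let $P$ be a finite poset with $n$ elements and $k\ge 0$. Then there is a bijection between $\mathrm{Lin}^{+k}(P)$ and the set of triples $(T,\bar t,\bar p)$ where $T\in\mathrm{Lin}(P)$, $\bar t=(t_1,\dots,t_k)$ is a sequence of integers with $0<t_1\le\cdots\le t_k\le n$, and $\bar p=(p_1,\dots,p_k)\in P^k$ with $p_i$ a maximal element of $T^{-1}(\{1,\dots,t_i\})$ for every $i$.
   Context: $\mathrm{Lin}(P)$ is the set of linear extensions of $P$: bijections $T:P\to[n]$ with $T(p)<T(q)$ whenever $p<q$. $\mathrm{Lin}^{+k}(P)$ is the set of set-valued linear extensions with values in $[n+k]$: maps $S$ from $P$ to subsets of $[n+k]$ such that each $S(p)$ is nonempty, the sets $S(p)$ are pairwise disjoint with union $[n+k]$, and $\max S(p)<\min S(q)$ whenever $p<q$. *)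

(* Defs.v *)
From HB Require Import structures.
From mathcomp Require Import all_boot all_order.
Set Implicit Arguments. Unset Strict Implicit. Unset Printing Implicit Defensive.
Import Order.TTheory.
Local Open Scope order_scope.

(* Conventions: [m] = {1,...,m} is modelled by 'I_m = {0,...,m-1}
   (value v in 'I_m stands for v+1 in [m]). *)

Section Defs.
Context {d : Order.disp_t} (P : finPOrderType d).

Definition is_lin (T : {ffun P -> 'I_#|P|}) : Prop :=
  bijective T /\ (forall p q : P, p < q -> (T p < T q)%N).

Definition Lin := {T : {ffun P -> 'I_#|P|} | is_lin T}.

(* Lin^{+k}(P): S : P -> subsets of [n+k], nonempty, pairwise disjoint,
   covering [n+k], with max S(p) < min S(q) whenever p < q. *)
Definition is_setlin (k : nat) (S : {ffun P -> {set 'I_(#|P| + k)}}) : Prop :=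
  [/\ forall p, S p != set0,
      forall p q, p != q -> [disjoint S p & S q],
      \bigcup_(p : P) S p = setT
    & forall p q : P, p < q ->
        forall a b, a \in S p -> b \in S q -> (a < b)%N ].

Definition SetLin (k : nat) := {S : {ffun P -> {set 'I_(#|P| + k)}} | is_setlin S}.

Definition is_maximal_in (A : {set P}) (p : P) : Prop :=
  p \in A /\ (forall q, q \in A -> ~ (p < q)).

(* T^{-1}({1,...,t}) in the 0-based encoding: values 0..t-1 *)
Definition lin_preimage (T : {ffun P -> 'I_#|P|}) (t : nat) : {set P} :=
  [set x | (T x < t)%N].

Definition is_triple (k : nat)
    (x : Lin * ({ffun 'I_k -> nat} * {ffun 'I_k -> P})) : Prop :=
  let T := proj1_sig x.1 in let t := x.2.1 in let pp := x.2.2 in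
  [/\ forall i : 'I_k, (0 < t i)%N,
      forall i j : 'I_k, (i <= j)%N -> (t i <= t j)%N,
      forall i : 'I_k, (t i <= #|P|)%N
    & forall i : 'I_k, is_maximal_in (lin_preimage T (t i)) (pp i)].

Definition Triples (k : nat) :=
  {x : Lin * ({ffun 'I_k -> nat} * {ffun 'I_k -> P}) | is_triple x}.

End Defs.

(* Main.v *)
Require Import Defs.
From HB Require Import structures.
From mathcomp Require Import all_boot all_order zify.
From Stdlib Require Import ProofIrrelevance IndefiniteDescription.
Set Implicit Arguments. Unset Strict Implicit. Unset Printing Implicit Defensive.

Lemma card_prefix k m : m <= k -> #|[set j : 'I_k | j < m]| = m.
Proof.
move=> hm.
have -> : [set j : 'I_k | j < m] = widen_ord hm @: [set: 'I_m].
  apply/setP => j; rewrite inE; apply/idP/imsetP => [hj|[i _ ->]] //.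
  by exists (Ordinal hj) => //; apply: val_inj.
  exact: (ltn_ord i).
rewrite card_imset; last by move=> x y /(congr1 val) /= e; apply: val_inj.
by rewrite cardsT card_ord.
Qed.

Lemma incr_inj k (v : 'I_k -> nat) (Hv : forall i j : 'I_k, i < j -> v i < v j) :
  forall i j, v i = v j -> i = j.
Proof.
move=> i j e; case: (ltngtP i j) => h.
- by have := Hv _ _ h; rewrite e ltnn.
- by have := Hv _ _ h; rewrite e ltnn.
- by apply/val_inj.
Qed.

Lemma incr_lt k (v : 'I_k -> nat) (Hv : forall i j : 'I_k, i < j -> v i < v j) :
  forall i j, (v i < v j) = (i < j).
Proof.
move=> i j; case: (ltngtP i j) => h.
- by rewrite Hv.
- by apply/negbTE; rewrite -leqNgt ltnW // Hv.
- by rewrite (val_inj h) ltnn.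
Qed.

Lemma incr_eq k (v v' : 'I_k -> nat)
  (Hv : forall i j : 'I_k, i < j -> v i < v j) (Hv' : forall i j : 'I_k, i < j -> v' i < v' j)
  (H1 : forall i, exists j, v i = v' j) (H2 : forall j, exists i, v' j = v i) :
  forall i, v i = v' i.
Proof.
suff: forall m (i : 'I_k), i < m -> v i = v' i by move=> h i; exact: (h i.+1).
elim=> [|m IH] i // him.
case: (H1 i) => j ej.
case: (ltngtP j i) => hji.
- have := IH j (leq_trans hji him); rewrite -ej => /(incr_inj Hv) E.
  by move: hji; rewrite E ltnn.
- case: (H2 i) => i2 e2.
  have : v i2 < v i by rewrite -e2 ej; exact: Hv'.
  rewrite incr_lt // => lt2; have := IH i2 (leq_trans lt2 him).
  rewrite -e2 => /(incr_inj Hv') E; move: lt2; rewrite E ltnn //.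
- by rewrite ej (val_inj hji).
Qed.

Lemma sig_eq (A : Type) (Q : A -> Prop) (x y : sig Q) :
  proj1_sig x = proj1_sig y -> x = y.
Proof.
case: x => x hx; case: y => y hy /= e; subst y.
by rewrite (proof_irrelevance _ hx hy).
Qed.

Lemma enum_incr N k (E : {set 'I_N}) : #|E| = k -> k <= N ->
  exists v : 'I_k -> 'I_N, (forall i j : 'I_k, i < j -> v i < v j) /\
     (forall a, a \in E <-> exists i, a = v i).
Proof.
move=> hE hkN.
set s := enum E.
have ss : size s = k by rewrite /s -cardE.
have srt : sorted ltn (map val s).
  apply: (subseq_sorted ltn_trans (s2 := map val (enum 'I_N))).
    apply: map_subseq; rewrite /s /enum_mem -enumT.
    have -> : [seq x <- enum 'I_N | mem 'I_N x] = enum 'I_N by exact/all_filterP/allP.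
    exact: filter_subseq.
  by rewrite val_enum_ord iota_ltn_sorted.
have dflt : forall i : 'I_k, i < N by move=> i; exact: leq_trans (ltn_ord i) hkN.
exists (fun i => nth (Ordinal (dflt i)) s i); split.
- move=> i j hij.
  have hi : i < size s by rewrite ss.
  have hj : j < size s by rewrite ss.
  have hj' : j < size (map val s) by rewrite size_map.
  have hi' : i < size (map val s) by rewrite size_map.
  have := sorted_ltn_nth ltn_trans 0 srt; move/(_ i j); rewrite !inE.
  move=> /(_ hi' hj' hij); rewrite !(nth_map (Ordinal (dflt i))) //.
  by rewrite (set_nth_default (Ordinal (dflt i)) (Ordinal (dflt j)) hj).
- move=> a; split=> [ha|[i ->]].
  + have hi : index a s < k by rewrite -ss index_mem mem_enum.
    exists (Ordinal hi) => /=; by rewrite nth_index ?mem_enum.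
  + by rewrite -mem_enum mem_nth // ss.
Qed.


Section G.
Variables (d : Order.disp_t) (P : finPOrderType d) (k : nat).
Variables (T : {ffun P -> 'I_#|P|}) (t : {ffun 'I_k -> nat}) (pp : {ffun 'I_k -> P}).

Definition cnt r := #|[set i : 'I_k | t i <= r]|.
Definition Mv p := T p + cnt (T p).
Definition Gset : {ffun P -> {set 'I_(#|P| + k)}} :=
  [ffun p => [set a : 'I_(#|P| + k) | (val a == Mv p) ||
              [exists i, (pp i == p) && (val a == t i + i)]]].

Lemma Gset_mem a p : (a \in Gset p) =
   (val a == Mv p) || [exists i, (pp i == p) && (val a == t i + i)].
Proof. by rewrite ffunE inE. Qed.

Lemma cnt_mono r r' : r <= r' -> cnt r <= cnt r'.
Proof.
move=> h; apply: subset_leq_card; apply/subsetP => i; rewrite !inE => hi.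
exact: leq_trans hi h.
Qed.

Lemma cnt_le r : cnt r <= k.
Proof. by rewrite /cnt -[k in _ <= k]card_ord max_card. Qed.

Lemma Mv_lt p : Mv p < #|P| + k.
Proof. have := ltn_ord (T p); have := cnt_le (T p); rewrite /Mv; lia. Qed.

Lemma Mv_mono p q : T p < T q -> Mv p < Mv q.
Proof. move=> h; have := cnt_mono (ltnW h); rewrite /Mv; lia. Qed.

Lemma Mv_lt_iff p q : (Mv p < Mv q) = (T p < T q).
Proof.
case: (ltnP (T p) (T q)) => h; first by rewrite Mv_mono.
have := cnt_mono h; rewrite /Mv; lia.
Qed.

Hypothesis HT : is_lin T.
Hypothesis Ht0 : forall i, 0 < t i.
Hypothesis Htm : forall i j : 'I_k, i <= j -> t i <= t j.
Hypothesis Htn : forall i, t i <= #|P|.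
Hypothesis Hpp : forall i, is_maximal_in (lin_preimage T (t i)) (pp i).

Lemma T_inj : injective T.
Proof. by case: HT => /bij_inj. Qed.

Lemma Mv_inj p q : Mv p = Mv q -> p = q.
Proof.
move=> e; apply: T_inj; apply: val_inj.
case: (ltngtP (T p) (T q)) => // h.
- by move: h; rewrite -Mv_lt_iff e ltnn.
- by move: h; rewrite -Mv_lt_iff e ltnn.
Qed.

Lemma cnt_prefix r (i : 'I_k) : (t i <= r) = (i < cnt r).
Proof.
apply/idP/idP => [h|].
- have sub : [set j : 'I_k | j < i.+1] \subset [set j | t j <= r].
    apply/subsetP => j; rewrite !inE => hj; apply: leq_trans h; apply: Htm.
    by rewrite -ltnS.
  by have := subset_leq_card sub; rewrite card_prefix.
- apply: contraLR; rewrite -!ltnNge => h.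
  have sub : [set j | t j <= r] \subset [set j : 'I_k | j < i].
    apply/subsetP => j; rewrite !inE => hj; rewrite ltnNge; apply/negP => ij.
    by have := leq_trans (Htm ij) hj; rewrite leqNgt h.
  by have := subset_leq_card sub; rewrite card_prefix // ltnW.
Qed.

Lemma v_mono (i j : 'I_k) : i < j -> t i + i < t j + j.
Proof. move=> h; have := Htm (ltnW h); lia. Qed.

Lemma v_inj (i j : 'I_k) : t i + i = t j + j -> i = j.
Proof. exact: (incr_inj (v := fun i => t i + i) v_mono). Qed.

Lemma v_lt (i : 'I_k) : t i + i < #|P| + k.
Proof. have := Htn i; have := ltn_ord i; lia. Qed.

Lemma Mv_v_lt p (i : 'I_k) : (Mv p < t i + i) = (T p < t i).
Proof.
case: (ltnP (T p) (t i)) => h.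
- have : cnt (T p) <= i by rewrite leqNgt -cnt_prefix -ltnNge.
  rewrite /Mv; lia.
- have := h; rewrite cnt_prefix /Mv => h2; lia.
Qed.

Lemma v_Mv_lt p (i : 'I_k) : (t i + i < Mv p) = (t i <= T p).
Proof.
case: (ltnP (T p) (t i)) => h.
- have : cnt (T p) <= i by rewrite leqNgt -cnt_prefix -ltnNge.
  rewrite /Mv; lia.
- have := h; rewrite cnt_prefix /Mv => h2; lia.
Qed.

Lemma Mv_neq_v p (i : 'I_k) : Mv p != t i + i.
Proof.
case: (ltnP (T p) (t i)) => h.
- by rewrite neq_ltn Mv_v_lt h.
- by rewrite neq_ltn v_Mv_lt h orbT.
Qed.

Lemma G_owner a p q : a \in Gset p -> a \in Gset q -> p = q.
Proof.
rewrite !Gset_mem => /orP[/eqP ep|/existsP[i /andP[/eqP ip /eqP ei]]]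
                     /orP[/eqP eq|/existsP[j /andP[/eqP jq /eqP ej]]].
- by apply: Mv_inj; rewrite -ep -eq.
- by have := Mv_neq_v p j; rewrite -ep ej eqxx.
- by have := Mv_neq_v q i; rewrite -eq ei eqxx.
- by rewrite -ip -jq (v_inj (etrans (esym ei) ej)).
Qed.

Lemma Gset_min a p : a \in Gset p -> Mv p <= val a.
Proof.
rewrite Gset_mem => /orP[/eqP ->//|/existsP[i /andP[/eqP ip /eqP ->]]].
by apply: ltnW; rewrite Mv_v_lt -ip; case: (Hpp i); rewrite inE.
Qed.

Definition Mo p : 'I_(#|P| + k) := Ordinal (Mv_lt p).
Definition vo i : 'I_(#|P| + k) := Ordinal (v_lt i).

Lemma Mo_in p : Mo p \in Gset p.
Proof. by rewrite Gset_mem eqxx. Qed.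

Lemma vo_in i : vo i \in Gset (pp i).
Proof. by rewrite Gset_mem; apply/orP; right; apply/existsP; exists i; rewrite !eqxx. Qed.

Lemma G_cover : \bigcup_(p : P) Gset p = setT.
Proof.
set A := Mo @: [set: P]; set B := vo @: [set: 'I_k].
have cA : #|A| = #|P|.
  rewrite card_imset ?cardsT // => p q /(congr1 val) /=; exact: Mv_inj.
have cB : #|B| = k.
  rewrite card_imset ?cardsT ?card_ord // => i j /(congr1 val) /=; exact: v_inj.
have dAB : A :&: B = set0.
  apply/setP => a; rewrite !inE; apply/negP => /andP[/imsetP[p _ ->] /imsetP[i _]].
  by move/(congr1 val) => /= /eqP; rewrite (negbTE (Mv_neq_v p i)).
have AB : A :|: B = setT.
  apply/eqP; rewrite eqEcard subsetT cardsT card_ord cardsU dAB cards0 cA cB.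
  by rewrite subn0 leqnn.
apply/setP => a; rewrite inE; apply/bigcupP.
have : a \in A :|: B by rewrite AB inE.
rewrite inE => /orP[/imsetP[p _ ->]|/imsetP[i _ ->]].
- by exists p => //; exact: Mo_in.
- by exists (pp i) => //; exact: vo_in.
Qed.

Lemma G_order (p q : P) : (p < q)%O ->
  forall a b, a \in Gset p -> b \in Gset q -> val a < val b.
Proof.
move=> pq a b; have Tpq := HT.2 _ _ pq.
rewrite !Gset_mem => /orP[/eqP ->|/existsP[i /andP[/eqP ip /eqP ->]]]
                     /orP[/eqP ->|/existsP[j /andP[/eqP jq /eqP ->]]].
- exact: Mv_mono.
- rewrite Mv_v_lt; apply: leq_trans Tpq _; apply: ltnW.
  by case: (Hpp j) => + _; rewrite inE jq.
- rewrite v_Mv_lt leqNgt; apply/negP => h.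
  case: (Hpp i) => _ /(_ q); rewrite inE ip => /(_ h); by [].
- have h1 : t i <= T q.
    rewrite leqNgt; apply/negP => h.
    by case: (Hpp i) => _ /(_ q); rewrite inE ip => /(_ h).
  have h2 : T q < t j by case: (Hpp j) => + _; rewrite inE jq.
  have tij := leq_ltn_trans h1 h2.
  have ij : i < j.
    by rewrite ltnNge; apply/negP => /Htm; rewrite leqNgt tij.
  exact: v_mono.
Qed.

Lemma Gset_ok : is_setlin Gset.
Proof.
split.
- by move=> p; apply/set0Pn; exists (Mo p); exact: Mo_in.
- move=> p q pq; rewrite -setI_eq0; apply/eqP/setP => a; rewrite !inE.
  apply/negP => /andP[ap aq]; by rewrite (G_owner ap aq) eqxx in pq.
- exact: G_cover.
- exact: G_order.
Qed.

End G.


Lemma lin_rank d (P : finPOrderType d) (T : {ffun P -> 'I_#|P|}) :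
  bijective T -> forall p, #|[set q | T q < T p]| = T p.
Proof.
move=> bT p; have iT := bij_inj bT.
rewrite -(card_imset _ iT).
have -> : T @: [set q | T q < T p] = [set j : 'I_#|P| | j < T p].
  apply/setP => j; rewrite inE; apply/imsetP/idP => [[q]|h].
    by rewrite inE => h ->.
  case: bT => g gK Kg; exists (g j); by rewrite ?inE Kg.
by rewrite card_prefix // ltnW.
Qed.

Section Inj.
Variables (d : Order.disp_t) (P : finPOrderType d) (k : nat).
Variables (T : {ffun P -> 'I_#|P|}) (t : {ffun 'I_k -> nat}) (pp : {ffun 'I_k -> P}).
Hypothesis HT : is_lin T.
Hypothesis Ht0 : forall i, 0 < t i.
Hypothesis Htm : forall i j : 'I_k, i <= j -> t i <= t j.
Hypothesis Htn : forall i, t i <= #|P|.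
Hypothesis Hpp : forall i, is_maximal_in (lin_preimage T (t i)) (pp i).
Variables (T' : {ffun P -> 'I_#|P|}) (t' : {ffun 'I_k -> nat}) (pp' : {ffun 'I_k -> P}).
Hypothesis HT' : is_lin T'.
Hypothesis Ht0' : forall i, 0 < t' i.
Hypothesis Htm' : forall i j : 'I_k, i <= j -> t' i <= t' j.
Hypothesis Htn' : forall i, t' i <= #|P|.
Hypothesis Hpp' : forall i, is_maximal_in (lin_preimage T' (t' i)) (pp' i).
Hypothesis EG : Gset T t pp = Gset T' t' pp'.

Lemma eG p : Gset T t pp p = Gset T' t' pp' p.
Proof. by rewrite EG. Qed.

Lemma eM p : Mv T t p = Mv T' t' p.
Proof.
apply/eqP; rewrite eqn_leq; apply/andP; split.
- have := Mo_in T' t' pp' p; rewrite -eG => /Gset_min; apply => //.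
- have := Mo_in T t pp p; rewrite eG => /Gset_min; apply => //.
Qed.

Lemma eT : T = T'.
Proof.
apply/ffunP => p; apply: val_inj; change (nat_of_ord (T p) = nat_of_ord (T' p)).
rewrite -(lin_rank HT.1) -(lin_rank HT'.1); apply: eq_card => q; rewrite !inE.
by rewrite -(Mv_lt_iff T t) -(Mv_lt_iff T' t') !eM.
Qed.

Lemma ev1 (i : 'I_k) : exists j : 'I_k, t i + i = t' j + j.
Proof.
have := vo_in T pp Htn i; rewrite eG Gset_mem => /orP[|/existsP[j /andP[_ /eqP e]]].
- by rewrite /= -eM eq_sym (negbTE (Mv_neq_v T Htm _ _)).
- by exists j.
Qed.

Lemma ev2 (i : 'I_k) : exists j : 'I_k, t' i + i = t j + j.
Proof.
have := vo_in T' pp' Htn' i; rewrite -eG Gset_mem => /orP[|/existsP[j /andP[_ /eqP e]]].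
- by rewrite /= eM eq_sym (negbTE (Mv_neq_v T' Htm' _ _)).
- by exists j.
Qed.

Lemma et : t = t'.
Proof.
apply/ffunP => i.
have := @incr_eq k (fun i => t i + i) (fun i => t' i + i) (v_mono Htm) (v_mono Htm') ev1 ev2 i.
by move/eqP; rewrite eqn_add2r => /eqP.
Qed.

Lemma epp : pp = pp'.
Proof.
apply/ffunP => i.
have h1 := vo_in T pp Htn i; rewrite eG in h1.
have h2 := vo_in T' pp' Htn' i.
have e : vo Htn i = vo Htn' i by apply: val_inj => /=; rewrite et.
rewrite e in h1.
exact: (G_owner HT' Htm' h1 h2).
Qed.

End Inj.


Section Surj.
Variables (d : Order.disp_t) (P : finPOrderType d) (k : nat).
Variables (S : {ffun P -> {set 'I_(#|P| + k)}}) (HS : is_setlin S).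
Variables (m : P -> 'I_(#|P| + k)).
Hypothesis Hm1 : forall p, m p \in S p.
Hypothesis Hm2 : forall p b, b \in S p -> m p <= b.
Definition Fs := m @: [set: P].
Variable v : 'I_k -> 'I_(#|P| + k).
Hypothesis Hv1 : forall i j : 'I_k, i < j -> v i < v j.
Hypothesis Hv2 : forall a, a \in ~: Fs <-> exists i, a = v i.
Variable o : 'I_k -> P.
Hypothesis Ho : forall i, v i \in S (o i).

Lemma owner a p q : a \in S p -> a \in S q -> p = q.
Proof.
move=> ap aq; case: (eqVneq p q) => // pq.
case: HS => _ hd _ _; by rewrite (disjointFr (hd _ _ pq) ap) in aq.
Qed.

Lemma m_inj : injective m.
Proof. move=> p q e; apply: (owner (Hm1 p)); rewrite e; exact: Hm1. Qed.

Lemma cardFs : #|Fs| = #|P|.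
Proof. by rewrite card_imset ?cardsT //; exact: m_inj. Qed.

Definition cF x := #|[set a : 'I_(#|P| + k) | a < x] :&: Fs|.
Definition cE x := #|[set a : 'I_(#|P| + k) | a < x] :\: Fs|.

Lemma cFE x : x <= #|P| + k -> cF x + cE x = x.
Proof. by move=> hx; rewrite /cF /cE cardsID card_prefix. Qed.

Lemma cF_mono x y : x <= y -> cF x <= cF y.
Proof.
move=> h; apply: subset_leq_card; apply/subsetP => a; rewrite !inE => /andP[ha ->].
by rewrite (leq_trans ha h).
Qed.

Lemma cF_le x : cF x <= #|P|.
Proof. by rewrite -cardFs; apply: subset_leq_card; exact: subsetIr. Qed.

Lemma cF_strict (a : 'I_(#|P| + k)) x : a \in Fs -> a < x -> cF a < cF x.
Proof.
move=> aF ax.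
have sub : a |: ([set b : 'I_(#|P| + k) | b < a] :&: Fs) \subset
           [set b : 'I_(#|P| + k) | b < x] :&: Fs.
  apply/subsetP => b; rewrite !inE => /orP[/eqP ->|/andP[ba ->]].
    by rewrite ax aF.
  by rewrite (ltn_trans ba ax).
have := subset_leq_card sub; rewrite cardsU1 !inE ltnn /=.
by rewrite /cF.
Qed.

Lemma v_notF i : v i \notin Fs.
Proof. have : v i \in ~: Fs by apply/Hv2; exists i. by rewrite inE. Qed.

Lemma vinj i j : v i = v j -> i = j.
Proof.
move=> e; apply: (incr_inj (v := fun i => nat_of_ord (v i))) => //.
by rewrite e.
Qed.

Lemma cE_v i : cE (v i) = i.
Proof.
rewrite /cE.
have -> : [set a : 'I_(#|P| + k) | a < v i] :\: Fs = v @: [set j : 'I_k | j < i].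
  apply/setP => a; rewrite !inE; apply/andP/imsetP.
  - move=> [aF ai]; have : a \in ~: Fs by rewrite inE.
    move/Hv2 => [j ej]; exists j => //; rewrite inE.
    by rewrite -(incr_lt (v := fun i => nat_of_ord (v i))) // -ej.
  - move=> [j]; rewrite inE => ji ->; split; first exact: v_notF.
    by rewrite (incr_lt (v := fun i => nat_of_ord (v i))).
rewrite card_imset; last exact: vinj.
by rewrite card_prefix // ltnW.
Qed.

Definition tf := [ffun i : 'I_k => v i - i].

Lemma tf_cF i : tf i = cF (v i).
Proof.
have := cFE (ltnW (ltn_ord (v i))); rewrite cE_v ffunE; lia.
Qed.

Lemma tf_v i : tf i + i = v i.
Proof.
have := cFE (ltnW (ltn_ord (v i))); rewrite cE_v tf_cF; lia.
Qed.

Lemma mv_lt i : m (o i) < v i.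
Proof.
rewrite ltn_neqAle Hm2 ?Ho // andbT; apply/negP => /eqP e.
have := v_notF i; have : m (o i) \in Fs by apply: imset_f.
by move/val_inj: e => ->; move=> ->.
Qed.

Lemma mF p : m p \in Fs.
Proof. exact: imset_f. Qed.

Lemma Tn p : cF (m p) < #|P|.
Proof.
apply: leq_trans (cF_le (m p).+1); apply: cF_strict; [exact: mF | exact: ltnSn].
Qed.

Definition Tf : {ffun P -> 'I_#|P|} := [ffun p => Ordinal (Tn p)].

Lemma Tf_val p : val (Tf p) = cF (m p).
Proof. by rewrite ffunE. Qed.

Lemma m_order p q : (p < q)%O -> m p < m q.
Proof. case: HS => _ _ _ ho pq; exact: ho pq _ _ (Hm1 p) (Hm1 q). Qed.

Lemma cF_m_lt p q : (cF (m p) < cF (m q)) = (m p < m q).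
Proof.
case: (ltngtP (m p) (m q)) => h.
- by rewrite cF_strict // mF.
- by apply/negbTE; rewrite -leqNgt ltnW // cF_strict // mF.
- by rewrite (val_inj h) ltnn.
Qed.

Lemma HTf : is_lin Tf.
Proof.
split.
- apply: inj_card_bij; last by rewrite card_ord.
  move=> p q /(congr1 val); rewrite !Tf_val => e.
  apply: m_inj; apply: val_inj.
  case: (ltngtP (m p) (m q)) => // h.
  + by move: h; rewrite -cF_m_lt e ltnn.
  + by move: h; rewrite -cF_m_lt e ltnn.
- move=> p q pq; rewrite !Tf_val cF_m_lt; exact: m_order.
Qed.

Lemma Ht0 i : 0 < tf i.
Proof. rewrite tf_cF; apply: leq_ltn_trans (cF_strict (mF (o i)) (mv_lt i)). by []. Qed.

Lemma Htm (i j : 'I_k) : i <= j -> tf i <= tf j.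
Proof.
rewrite !tf_cF leq_eqVlt => /orP[/eqP/val_inj ->//|h].
by apply: cF_mono; apply: ltnW; apply: Hv1.
Qed.

Lemma Htn i : tf i <= #|P|.
Proof. by rewrite tf_cF cF_le. Qed.

Lemma Hpp i : is_maximal_in (lin_preimage Tf (tf i)) (o i).
Proof.
split.
- by rewrite inE Tf_val tf_cF; apply: cF_strict (mF _) (mv_lt i).
- move=> q; rewrite inE Tf_val tf_cF => h oq.
  case: HS => _ _ _ /(_ _ _ oq _ _ (Ho i) (Hm1 q)) => vm.
  by have := cF_mono (ltnW vm); rewrite leqNgt h.
Qed.

Lemma cnt_m p : cnt tf (Tf p) = cE (m p).
Proof.
rewrite /cnt /cE.
have -> : [set a : 'I_(#|P| + k) | a < m p] :\: Fs = v @: [set i | tf i <= Tf p].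
  apply/setP => a; rewrite !inE; apply/andP/imsetP.
  - move=> [aF ai]; have : a \in ~: Fs by rewrite inE.
    move/Hv2 => [j ej]; exists j => //; rewrite inE Tf_val tf_cF -ej.
    by apply: cF_mono; rewrite ltnW.
  - move=> [j]; rewrite inE Tf_val tf_cF => ji ->; split; first exact: v_notF.
    case: (ltngtP (v j) (m p)) => // h.
    + by move: ji; rewrite leqNgt cF_strict ?mF.
    + by have := v_notF j; rewrite (val_inj h) mF.
by rewrite card_imset //; exact: vinj.
Qed.

Lemma Gsub p : S p \subset Gset Tf tf (finfun o) p.
Proof.
apply/subsetP => a ap; rewrite Gset_mem.
case: (boolP (a \in Fs)) => aF.
- move: aF => /imsetP[q _ eq]; subst a.
  rewrite (owner (Hm1 q) ap); apply/orP; left.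
  by rewrite /Mv cnt_m Tf_val cFE // ltnW.
- have : a \in ~: Fs by rewrite inE.
  move/Hv2 => [i ei]; subst a; apply/orP; right; apply/existsP; exists i.
  by rewrite ffunE (owner (Ho i) ap) eqxx tf_v /=.
Qed.

Lemma Gset_S : Gset Tf tf (finfun o) = S.
Proof.
apply/ffunP => p; apply/eqP; rewrite eqEsubset Gsub andbT.
apply/subsetP => a ap.
have : a \in \bigcup_(q : P) S q by case: HS => _ _ -> _; rewrite inE.
move/bigcupP => [q _ aq].
have aq' := subsetP (Gsub q) a aq.
by rewrite (G_owner HTf Htm ap aq').
Qed.

End Surj.

Lemma surj d (P : finPOrderType d) (k : nat) (S : {ffun P -> {set 'I_(#|P| + k)}}) :
  is_setlin S -> exists (T : {ffun P -> 'I_#|P|}) (t : {ffun 'I_k -> nat}) (pp : {ffun 'I_k -> P}),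
   is_lin T /\ (forall i, 0 < t i) /\ (forall i j : 'I_k, i <= j -> t i <= t j) /\
       (forall i, t i <= #|P|) /\ (forall i, is_maximal_in (lin_preimage T (t i)) (pp i))
     /\ Gset T t pp = S.
Proof.
move=> HS.
have H1 : forall p : P, exists a : 'I_(#|P| + k), a \in S p /\ forall b, b \in S p -> a <= b.
  move=> p.
  case: HS => /(_ p) /set0Pn [a0 a0p] _ _ _.
  case: (arg_minnP (fun a : 'I_(#|P| + k) => nat_of_ord a) a0p) => a ap amin.
  by exists a; split.
have [m Hm] := fin_all_exists H1.
have Hm1 p := (Hm p).1.
have Hm2 p := (Hm p).2.
have cE : #|~: Fs m| = k.
  have := cardsC (Fs m); rewrite card_ord (cardFs HS Hm1) => /eqP.
  by rewrite eqn_add2l => /eqP.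
have [v [Hv1 Hv2]] := enum_incr cE (leq_addl _ _).
have H2 : forall i : 'I_k, exists p : P, v i \in S p.
  move=> i.
  have : v i \in \bigcup_(q : P) S q by case: HS => _ _ -> _; rewrite inE.
  by move/bigcupP => [q _ h]; exists q.
have [o Ho] := fin_all_exists H2.
exists (Tf HS Hm1), (tf v), (finfun o); split; [|split; [|split; [|split; [|split]]]].
- by apply: HTf.
- move=> i; apply: Ht0; eassumption.
- move=> i j; apply: Htm; eassumption.
- move=> i; apply: Htn; eassumption.
- move=> i; have := Hpp HS Hm1 Hm2 Hv1 Hv2 Ho i; by rewrite !ffunE.
- exact: (Gset_S HS Hm1 Hv1 Hv2 Ho).
Qed.


Section Main.
Variables (d : Order.disp_t) (P : finPOrderType d) (k : nat).

Definition Gval (x : Triples P k) :=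
  Gset (proj1_sig (proj1_sig x).1) (proj1_sig x).2.1 (proj1_sig x).2.2.

Lemma Gval_ok x : is_setlin (Gval x).
Proof.
case: x => [[[T HT] [t pp]] [] /= H0 Hm Hn Hp]; rewrite /Gval /=.
by apply: Gset_ok.
Qed.

Definition Gf (x : Triples P k) : SetLin P k := exist _ (Gval x) (Gval_ok x).

Lemma Gf_inj : injective Gf.
Proof.
move=> x y /(congr1 (@proj1_sig _ _)); rewrite /= /Gval.
case: x => [[[T HT] [t pp]] [] /= H0 Hm Hn Hp];
case: y => [[[T' HT'] [t' pp']] [] /= H0' Hm' Hn' Hp'] /= EG.
have eT' := eT HT Hm Hp HT' Hm' Hp' EG.
have et' := et Hm Hn Hp Hm' Hn' Hp' EG.
have epp' := epp Hm Hn Hp HT' Hm' Hn' Hp' EG.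
subst; apply: sig_eq => /=; congr (_, _); exact: sig_eq.
Qed.

Lemma Gf_surj s : exists x, Gf x = s.
Proof.
case: s => S HS.
have [T [t [pp [HT [H0 [Hm [Hn [Hp EG]]]]]]]] := surj HS.
have Htr : is_triple (exist _ T HT, (t, pp)) by split.
exists (exist _ _ Htr); apply: sig_eq => /=; exact: EG.
Qed.

End Main.

Theorem proposition21 (d : Order.disp_t) (P : finPOrderType d) (k : nat) :
  exists f : SetLin P k -> Triples P k, bijective f.
Proof.
pose F (s : SetLin P k) := proj1_sig (constructive_indefinite_description _ (Gf_surj s)).
have FK : forall s, Gf (F s) = s.
  by move=> s; rewrite /F; case: constructive_indefinite_description.
exists F; exists (@Gf d P k) => // x.
by apply: Gf_inj; rewrite FK.
Qed.
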